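(* Let $G$ and $H$ be fully supported graphs with no self-loops. Then $G$ and $H$ are strongly disjoint if and only if they are weakly disjoint and exactly one of the two graphs is a forest.
   Context: A weight function on finite $U$ is $\alpha:U\times U\to\mathbb{R}$, $\alpha\ge0$, symmetric, summing to $1$; degree $p(u)=\sum_{u'}\alpha(u,u')$. A graph is $G=(U,\alpha)$ with edges $(u,u')$ where $\alpha(u,u')>0$; a self-loop is an edge $(u,u)$; $G$ is fully supported if $p(u)>0$ for all $u$; a forest is a graph with no cycles (as an undirected graph). For graphs $(U,\alpha)$, $(V,\beta)$ with degrees $p,q$, a weight joining is a weight function $\gamma$ on $U\times V$ with degree $r(u,v)=\sum_{(u',v')}\gamma((u,v),(u',v'))$ such that $\sum_v r(u,v)=p(u)$, $\sum_u r(u,v)=q(v)$, $p(u)\sum_{\tilde v}\gamma((u,v),(u',\tilde v))=\alpha(u,u')r(u,v)$ and $q(v)\sum_{\tilde u}\gamma((u,v),(\tilde u,v'))=\beta(v,v')r(u,v)$ for all $u,u',v,v'$. The graphs are strongly disjoint if the only weight joining is $\alpha\otimes\beta$, $(\alpha\otimes\beta)((u,v),(u',v'))=\alpha(u,u')\beta(v,v')$; weakly disjoint if every weight joining has degree $r(u,v)=p(u)q(v)$. *)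

(* Defs.v *)
From HB Require Import structures.
From mathcomp Require Import all_boot all_order all_algebra.
From mathcomp Require Import reals.
Set Implicit Arguments. Unset Strict Implicit. Unset Printing Implicit Defensive.
Import Order.TTheory GRing.Theory Num.Theory.
Local Open Scope ring_scope.

Section Defs.
Variable R : realType.

Definition weight_fun (T : finType) (a : T -> T -> R) : Prop :=
  [/\ (forall x y, 0 <= a x y),
      (forall x y, a x y = a y x) &
      \sum_(x : T) \sum_(y : T) a x y = 1].

Definition deg (T : finType) (a : T -> T -> R) (x : T) : R := \sum_(y : T) a x y.

Definition fully_supported (T : finType) (a : T -> T -> R) : Prop :=
  forall x, 0 < deg a x.

Definition edge (T : finType) (a : T -> T -> R) : rel T := fun x y => 0 < a x y.

Definition no_self_loops (T : finType) (a : T -> T -> R) : Prop :=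
  forall x, ~~ edge a x x.

Definition has_cycle (T : finType) (a : T -> T -> R) : Prop :=
  exists s : seq T, [/\ (3 <= size s)%N, uniq s & cycle (edge a) s].

(* forest: no cycles (a self-loop also counts as a cycle) *)
Definition forest (T : finType) (a : T -> T -> R) : Prop :=
  no_self_loops a /\ ~ has_cycle a.

Definition tensor (U V : finType) (a : U -> U -> R) (b : V -> V -> R)
  : U * V -> U * V -> R := fun x y => a x.1 y.1 * b x.2 y.2.

Definition weight_joining (U V : finType) (a : U -> U -> R) (b : V -> V -> R)
  (g : U * V -> U * V -> R) : Prop :=
  [/\ weight_fun g,
      (forall u, \sum_(v : V) deg g (u, v) = deg a u),
      (forall v, \sum_(u : U) deg g (u, v) = deg b v),
      (forall u u' v, deg a u * \sum_(v' : V) g (u, v) (u', v') = a u u' * deg g (u, v)) &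
      (forall u v v', deg b v * \sum_(u' : U) g (u, v) (u', v') = b v v' * deg g (u, v))].

Definition strongly_disjoint (U V : finType) (a : U -> U -> R) (b : V -> V -> R) : Prop :=
  forall g, weight_joining a b g -> forall x y, g x y = tensor a b x y.

Definition weakly_disjoint (U V : finType) (a : U -> U -> R) (b : V -> V -> R) : Prop :=
  forall g, weight_joining a b g -> forall u v, deg g (u, v) = deg a u * deg b v.

End Defs.

(* Main.v *)
From Stdlib Require Import Classical.
Require Import Defs.
From mathcomp Require Import all_boot all_order all_algebra.
Set Implicit Arguments. Unset Strict Implicit. Unset Printing Implicit Defensive.

Section Graph.
Variable T : finType.
Variable e : rel T.
Hypothesis esym : symmetric e.
Hypothesis eirr : irreflexive e.
Hypothesis nocyc : ~ exists s : seq T, [/\ (3 <= size s)%N, uniq s & cycle e s].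

Lemma leaf_exists (S : {set T}) x0 : x0 \in S ->
  exists2 v, v \in S & forall w1 w2, w1 \in S -> w2 \in S -> e v w1 -> e v w2 -> w1 = w2.
Proof.
move=> x0S; apply: NNPP => Hn.
have H2 : forall v, v \in S -> exists w1 w2, [/\ w1 \in S, w2 \in S, e v w1, e v w2 & w1 != w2].
  move=> v vS; apply: NNPP => Hv; apply: Hn; exists v => // w1 w2 w1S w2S e1 e2.
  apply: NNPP => Hne; apply: Hv; exists w1, w2; split => //; exact/eqP.
have Hlong : forall n, exists x p, [/\ size p = n, uniq (x :: p), path e x p & all (mem S) (x :: p)].
  elim=> [|n [x [p [sz up pp ap]]]].
    by exists x0, [::]; rewrite /= x0S.
  have xS : x \in S by move: ap => /= /andP[].
  have [w1 [w2 [w1S w2S e1 e2 ne12]]] := H2 x xS.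
  have [y [yS exy yhd]] : exists y, [/\ y \in S, e x y & forall z p', p = z :: p' -> y != z].
    case: p {sz up pp ap} => [|z p]; first by exists w1; split.
    case: (eqVneq w1 z) => [Ew|Nw].
      exists w2; split => // z' p' [<- _]; by rewrite -Ew eq_sym.
    by exists w1; split => // z' p' [<- _].
  case yin : (y \in x :: p).
    exfalso; apply: nocyc.
    move: yin; rewrite inE => /orP[/eqP Eyx|].
      by move: exy; rewrite -Eyx eirr.
    case: p sz up pp ap yhd => [|z p'] // sz up pp ap yhd.
    rewrite inE (negbTE (yhd z p' erefl)) /= => yin'.
    case/splitPr: yin' sz up pp ap => p1 p2 sz up pp ap.
    exists [:: x, z & rcons p1 y]; split.
    - by rewrite /= size_rcons.
    - have E : [:: x, z & p1 ++ y :: p2] = [:: x, z & rcons p1 y] ++ p2 by rewrite /= cat_rcons.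
      by move: up; rewrite E cat_uniq => /andP[].
    - move: pp; rewrite /= rcons_path rcons_path cat_path /= last_rcons.
      by case/and4P=> -> -> -> _; rewrite esym exy.
  exists y, (x :: p); split => //.
  - by rewrite /= sz.
  - by rewrite cons_uniq yin up.
  - by rewrite /= esym exy.
  - by rewrite /= yS.
have [x [p [sz up _ _]]] := Hlong #|T|.
have := max_card (mem (x :: p)); by rewrite (card_uniqP up) /= sz ltnn.
Qed.


Lemma coloring_S n (S : {set T}) : #|S| = n ->
  exists c : T -> bool, forall x y, x \in S -> y \in S -> e x y -> c x != c y.
Proof.
elim: n S => [|n IH] S cS.
  exists (fun _ => true) => x y xS; move: cS => /eqP; rewrite cards_eq0 => /eqP E.
  by rewrite E inE in xS.
have [x0 x0S] : exists x, x \in S by apply/card_gt0P; rewrite cS.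
have [v vS Hv] := leaf_exists x0S.
have cS' : #|S :\ v| = n by move: cS; rewrite (cardsD1 v) vS add1n => -[].
have [c' Hc'] := IH (S :\ v) cS'.
pose cv := if [pick w in S :\ v | e v w] is Some w then ~~ c' w else true.
have Hcv : forall y, y \in S -> y != v -> e v y -> cv = ~~ c' y.
  move=> y yS yv evy; rewrite /cv; case: pickP => [w /andP[wS evw]|/(_ y)].
    by rewrite (Hv w y) // (subsetP (subsetDl S [set v])).
  by rewrite !inE yv yS evy.
exists (fun x => if x == v then cv else c' x) => x y xS yS exy.
case: (eqVneq x v) => [Ex|Nx]; case: (eqVneq y v) => [Ey|Ny].
- by move: exy; rewrite Ex Ey eirr.
- rewrite (Hcv y) //; first by case: (c' y).
  by rewrite -Ex.
- rewrite (Hcv x) //; first by case: (c' x).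
  by rewrite esym -Ey.
- by apply: Hc' => //; rewrite !inE ?Nx ?Ny.
Qed.

Lemma coloring : exists c : T -> bool, forall x y, e x y -> c x != c y.
Proof.
have [c Hc] := coloring_S (erefl #|[set: T]|).
by exists c => x y; apply: Hc; rewrite inE.
Qed.


Import GRing.Theory Num.Theory.
Local Open Scope ring_scope.

Lemma sum_single (R : numDomainType) (f : T -> R) :
  \sum_y f y = 0 -> (forall y1 y2, f y1 != 0 -> f y2 != 0 -> y1 = y2) -> forall y, f y = 0.
Proof.
move=> s0 Hu y; apply/eqP; apply: contraT => fy.
move: s0; rewrite (bigD1 y) //= big1 ?addr0 => [fy0|z zy].
  by move: fy; rewrite fy0 eqxx.
apply/eqP; apply: contraT => fz; by move: zy; rewrite (Hu z y fz fy) eqxx.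
Qed.

Lemma zero_marg_S (R : numDomainType) (D : T -> T -> R) :
  (forall x, \sum_y D x y = 0) -> (forall y, \sum_x D x y = 0) ->
  (forall x y, D x y != 0 -> e x y) ->
  forall n (S : {set T}), #|S| = n -> (forall x y, D x y != 0 -> (x \in S) && (y \in S)) ->
  forall x y, D x y = 0.
Proof.
move=> Hr Hc He; elim=> [|n IH] S cS HS x y.
  apply/eqP; apply: contraT => /HS; move: cS => /eqP; rewrite cards_eq0 => /eqP ->.
  by rewrite inE.
have [x0 x0S] : exists x, x \in S by apply/card_gt0P; rewrite cS.
have [v vS Hv] := leaf_exists x0S.
have cS' : #|S :\ v| = n by move: cS; rewrite (cardsD1 v) vS add1n => -[].
have Hrow : forall y, D v y = 0.
  apply: sum_single => // y1 y2 d1 d2; apply: Hv; rewrite ?He //.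
  - by case/andP: (HS _ _ d1).
  - by case/andP: (HS _ _ d2).
have Hcol : forall x, D x v = 0.
  move=> x'; apply: (sum_single (f := fun x => D x v)) => // y1 y2 d1 d2; apply: Hv.
  - by case/andP: (HS _ _ d1).
  - by case/andP: (HS _ _ d2).
  - by rewrite esym He.
  - by rewrite esym He.
apply: (IH (S :\ v)) => // x' y' d; rewrite !inE.
have /andP[-> ->] := HS _ _ d; rewrite !andbT.
apply/andP; split; apply/eqP => E; move: d; rewrite E ?Hrow ?Hcol eqxx //.
Qed.

Lemma zero_marg (R : numDomainType) (D : T -> T -> R) :
  (forall x, \sum_y D x y = 0) -> (forall y, \sum_x D x y = 0) ->
  (forall x y, D x y != 0 -> e x y) -> forall x y, D x y = 0.
Proof.
move=> Hr Hc He; apply: (zero_marg_S Hr Hc He (erefl #|[set: T]|)).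
by move=> *; rewrite !inE.
Qed.

End Graph.

From mathcomp Require Import reals ring lra.
Import Order.TTheory GRing.Theory Num.Theory.
Local Open Scope ring_scope.

Section Main.
Variable R : realType.

Lemma sum_pair (U V : finType) (G : U * V -> R) :
  \sum_x G x = \sum_u \sum_v G (u, v).
Proof. by rewrite pair_bigA; apply: eq_bigr => -[u v]. Qed.

Lemma sum_split2 (I J : finType) (A C : I -> R) (B E : J -> R) :
  \sum_i \sum_j (A i * B j + C i * E j) = (\sum_i A i) * (\sum_j B j) + (\sum_i C i) * (\sum_j E j).
Proof.
under eq_bigr do rewrite big_split /= -!mulr_sumr.
by rewrite big_split /= -!mulr_suml.
Qed.

Lemma le_sum_term (I : finType) (f : I -> R) i : (forall j, 0 <= f j) -> f i <= \sum_j f j.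
Proof. by move=> H; rewrite (bigD1 i) //= lerDl sumr_ge0. Qed.

Lemma antisym_sum (I : finType) (F : I -> I -> R) :
  (forall x y, F y x = - F x y) -> \sum_x deg F x = 0.
Proof.
move=> H; rewrite /deg; set S := (X in X = 0).
have : S = - S.
  rewrite {1}/S exchange_big /= /S -sumrN; apply: eq_bigr => x _; rewrite -sumrN.
  by apply: eq_bigr => y _; rewrite H.
by move/eqP; rewrite -addr_eq0 -mulr2n mulrn_eq0 /= => /eqP.
Qed.

Lemma deg_tensor (U V : finType) (a : U -> U -> R) (b : V -> V -> R) u v :
  deg (tensor a b) (u, v) = deg a u * deg b v.
Proof.
rewrite /deg sum_pair mulr_suml; apply: eq_bigr => u' _; rewrite mulr_sumr.
by apply: eq_bigr.
Qed.

Lemma perturb_joining (U V : finType) (a : U -> U -> R) (b : V -> V -> R)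
  (F : U -> U -> R) (D : V -> V -> R) :
  weight_fun a -> weight_fun b ->
  (forall x y, F y x = - F x y) -> (forall x y, D y x = - D x y) ->
  (forall x y, 0 <= a x.1 y.1 * b x.2 y.2 + F x.1 y.1 * D x.2 y.2) ->
  (forall u u' v, deg a u * (F u u' * deg D v) = a u u' * (deg F u * deg D v)) ->
  (forall v v' u, deg b v * (D v v' * deg F u) = b v v' * (deg F u * deg D v)) ->
  weight_joining a b (fun x y => a x.1 y.1 * b x.2 y.2 + F x.1 y.1 * D x.2 y.2).
Proof.
move=> [a0 asym a1] [b0 bsym b1] Fa Da H0 H2 H3.
have sF := antisym_sum Fa; have sD := antisym_sum Da.
have dg : forall u v, deg (fun x y => a x.1 y.1 * b x.2 y.2 + F x.1 y.1 * D x.2 y.2) (u, v)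
   = deg a u * deg b v + deg F u * deg D v.
  by move=> u v; rewrite /deg sum_pair /= sum_split2.
split.
- split => //.
  + by move=> x y; rewrite asym bsym Fa Da mulrNN.
  + rewrite -/(\sum_x deg (fun x y : U * V => a x.1 y.1 * b x.2 y.2 + F x.1 y.1 * D x.2 y.2) x).
    rewrite sum_pair.
    under eq_bigr do under eq_bigr do rewrite dg.
    by rewrite sum_split2 sF sD mulr0 addr0 -[1]mulr1; congr (_ * _).
- move=> u; under eq_bigr do rewrite dg.
  by rewrite big_split /= -!mulr_sumr b1 sD !mulr0 mulr1 addr0.
- move=> v; under eq_bigr do rewrite dg.
  by rewrite big_split /= -!mulr_suml a1 sF !mul0r mul1r addr0.
- move=> u u' v; rewrite dg /= big_split /= -!mulr_sumr -/(deg b v) -/(deg D v).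
  by rewrite mulrDr H2 [RHS]mulrDr mulrCA.
- move=> u v v'; rewrite dg /= big_split /= -!mulr_suml.
  have -> : \sum_i a u i = deg a u by [].
  have -> : \sum_i F u i = deg F u by [].
  rewrite mulrDr (mulrC (deg F u) (D v v')) H3; ring.
Qed.


Lemma ge0_not_gt0 (x : R) : 0 <= x -> ~~ (0 < x) -> x = 0.
Proof. by rewrite le_eqVlt => /orP[/eqP <-|->]. Qed.

Lemma joint_unique (T : finType) (a : T -> T -> R) (M : T -> T -> R) (c : R) :
  (forall x y, a x y = a y x) -> (forall x y, 0 <= a x y) -> forest a ->
  (forall x y, ~~ (0 < a x y) -> M x y = 0) ->
  (forall x, \sum_y M x y = c * deg a x) -> (forall y, \sum_x M x y = c * deg a y) ->
  forall x y, M x y = c * a x y.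
Proof.
move=> asym a0 [nsl nhc] Hs Hr Hc x y.
have esym : symmetric (edge a) by move=> x' y'; rewrite /edge asym.
have eirr : irreflexive (edge a) by move=> x'; apply/negbTE/nsl.
apply/eqP; rewrite -subr_eq0; apply/eqP.
apply: (zero_marg esym eirr nhc (D := fun x y => M x y - c * a x y)) => [x'|y'|x' y'].
- by rewrite sumrB Hr -mulr_sumr subrr.
- rewrite sumrB Hc -mulr_sumr /deg; under [X in _ - c * X]eq_bigr do rewrite asym.
  by rewrite subrr.
- apply: contraR => ne; rewrite Hs // (ge0_not_gt0 (a0 x' y') ne) mulr0 subrr.
  by rewrite eqxx.
Qed.

Lemma back (U V : finType) (alpha : U -> U -> R) (beta : V -> V -> R) :
  weight_fun alpha -> weight_fun beta ->
  fully_supported alpha -> fully_supported beta ->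
  weakly_disjoint alpha beta -> (forest alpha \/ forest beta) ->
  strongly_disjoint alpha beta.
Proof.
move=> [a0 asym a1] [b0 bsym b1] fsa fsb Hw Hf g Hg [u v] [u' v'].
have dg := Hw g Hg.
case: Hg => [[g0 gsym g1] m1 m2 c4 c5].
have Ha : forall u u' v, \sum_v' g (u, v) (u', v') = alpha u u' * deg beta v.
  move=> x x' y; apply: (mulfI (lt0r_neq0 (fsa x))).
  by rewrite c4 dg mulrCA.
have Hb : forall u v v', \sum_u' g (u, v) (u', v') = beta v v' * deg alpha u.
  move=> x y y'; apply: (mulfI (lt0r_neq0 (fsb y))).
  by rewrite c5 dg; ring.
have Hc : forall u u' v', \sum_v g (u, v) (u', v') = alpha u u' * deg beta v'.
  move=> x x' y'; under eq_bigr do rewrite gsym.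
  by rewrite Ha asym.
have Hd : forall u' v v', \sum_u g (u, v) (u', v') = beta v v' * deg alpha u'.
  move=> x' y y'; under eq_bigr do rewrite gsym.
  by rewrite Hb bsym.
rewrite /tensor /=.
case: Hf => Hf.
- suff J : forall x x', g (x, v) (x', v') = beta v v' * alpha x x' by rewrite J mulrC.
  apply: (joint_unique (M := fun x x' => g (x, v) (x', v')) asym a0 Hf).
  + move=> x x' /(ge0_not_gt0 (a0 x x')) E; apply/eqP; rewrite eq_le g0 andbT.
    by rewrite -(mulr0 (deg beta v)) -E mulrC -Ha (@le_sum_term _ (fun j => g (x, v) (x', j)) v' (fun j => g0 _ _)).
  + by move=> x; rewrite Hb.
  + by move=> x'; rewrite Hd.
- suff J : forall y y', g (u, y) (u', y') = alpha u u' * beta y y' by rewrite J.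
  apply: (joint_unique (M := fun y y' => g (u, y) (u', y')) bsym b0 Hf).
  + move=> y y' /(ge0_not_gt0 (b0 y y')) E; apply/eqP; rewrite eq_le g0 andbT.
    by rewrite -(mul0r (deg alpha u)) -E -Hb (@le_sum_term _ (fun j => g (u, y) (j, y')) u' (fun j => g0 _ _)).
  + by move=> y; rewrite Ha.
  + by move=> y'; rewrite Hc.
Qed.

Lemma exists_pos (I : finType) (f : I -> R) : 0 < \sum_i f i -> exists i, 0 < f i.
Proof.
move=> H; apply: NNPP => Hn; move: H; apply/negP; rewrite -leNgt.
apply: sumr_le0 => i _; rewrite leNgt; apply/negP => Hi; apply: Hn; by exists i.
Qed.

Lemma edge_exists (T : finType) (a : T -> T -> R) :
  weight_fun a -> fully_supported a -> exists x y, 0 < a x y.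
Proof.
move=> [_ _ a1] fs.
have [x _] : exists x, 0 < deg a x by apply: exists_pos; rewrite /deg a1 ltr01.
have [y Hy] := exists_pos (fs x).
by exists x, y.
Qed.

Lemma not_strong (U V : finType) (a : U -> U -> R) (b : V -> V -> R)
  (F : U -> U -> R) (D : V -> V -> R) x y :
  weight_fun a -> weight_fun b ->
  (forall x y, F y x = - F x y) -> (forall x y, D y x = - D x y) ->
  (forall x y, 0 <= a x.1 y.1 * b x.2 y.2 + F x.1 y.1 * D x.2 y.2) ->
  (forall u u' v, deg a u * (F u u' * deg D v) = a u u' * (deg F u * deg D v)) ->
  (forall v v' u, deg b v * (D v v' * deg F u) = b v v' * (deg F u * deg D v)) ->
  F x.1 y.1 * D x.2 y.2 != 0 -> ~ strongly_disjoint a b.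
Proof.
move=> wa wb Fa Da H0 H2 H3 ne S.
have E := S _ (perturb_joining wa wb Fa Da H0 H2 H3) x y.
move: ne; rewrite /tensor in E.
have -> : F x.1 y.1 * D x.2 y.2 = (a x.1 y.1 * b x.2 y.2 + F x.1 y.1 * D x.2 y.2) - a x.1 y.1 * b x.2 y.2.
  by rewrite addrC addKr.
by rewrite E subrr eqxx.
Qed.

Definition sgn (c : bool) : R := if c then 1 else -1.

Lemma sgn_neq0 c : sgn c != 0.
Proof. by case: c; rewrite /sgn ?oppr_eq0 oner_eq0. Qed.

Lemma both_forest (U V : finType) (alpha : U -> U -> R) (beta : V -> V -> R) :
  weight_fun alpha -> weight_fun beta ->
  fully_supported alpha -> fully_supported beta ->
  forest alpha -> forest beta -> ~ strongly_disjoint alpha beta.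
Proof.
move=> wa wb fsa fsb [nsla nhca] [nslb nhcb].
have wa' := wa; have wb' := wb.
case: wa' => [a0 asym a1]; case: wb' => [b0 bsym b1].
have [ca Hca] : exists c : U -> bool, forall x y, edge alpha x y -> c x != c y.
  apply: (coloring (e := edge alpha)) => //.
  - by move=> x y; rewrite /edge asym.
  - by move=> x; apply/negbTE/nsla.
have [cb Hcb] : exists c : V -> bool, forall x y, edge beta x y -> c x != c y.
  apply: (coloring (e := edge beta)) => //.
  - by move=> x y; rewrite /edge bsym.
  - by move=> x; apply/negbTE/nslb.
have [u [u' Hu]] := edge_exists wa fsa.
have [v [v' Hv]] := edge_exists wb fsb.
pose F := fun x y => sgn (ca x) * alpha x y.
pose D := fun x y => sgn (cb x) * beta x y.
have dF : forall x, deg F x = sgn (ca x) * deg alpha x by move=> x; rewrite /deg mulr_sumr.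
have dD : forall x, deg D x = sgn (cb x) * deg beta x by move=> x; rewrite /deg mulr_sumr.
apply: (not_strong (F := F) (D := D) (x := (u, v)) (y := (u', v'))) => //.
- move=> x y; rewrite /F asym.
  have [Hp|Hn] := boolP (0 < alpha x y).
    by have := Hca _ _ Hp; rewrite /sgn; case: (ca x); case: (ca y) => // _; rewrite mulNr ?opprK.
  by rewrite (ge0_not_gt0 (a0 x y) Hn) !mulr0 oppr0.
- move=> x y; rewrite /D bsym.
  have [Hp|Hn] := boolP (0 < beta x y).
    by have := Hcb _ _ Hp; rewrite /sgn; case: (cb x); case: (cb y) => // _; rewrite mulNr ?opprK.
  by rewrite (ge0_not_gt0 (b0 x y) Hn) !mulr0 oppr0.
- move=> x y; rewrite /F /D.
  have := mulr_ge0 (a0 x.1 y.1) (b0 x.2 y.2).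
  by rewrite /sgn; case: (ca x.1); case: (cb x.2) => H; nra.
- by move=> x x' y; rewrite dF /F; ring.
- by move=> y y' x; rewrite dD /D; ring.
- by rewrite /F /D /= !mulf_neq0 ?sgn_neq0 ?lt0r_neq0.
Qed.

Definition circ (T : finType) (s : seq T) (x y : T) : R :=
  ((x \in s) && (y == next s x))%:R - ((y \in s) && (x == next s y))%:R.

Lemma circ_anti (T : finType) (s : seq T) x y : circ s y x = - circ s x y.
Proof. by rewrite /circ opprB. Qed.

Lemma sum_ind_eq (T : finType) (P : bool) (c : T) :
  \sum_y (P && (y == c))%:R = P%:R :> R.
Proof.
rewrite (bigD1 c) //= eqxx andbT big1 ?addr0 // => y /negbTE ->.
by rewrite andbF.
Qed.

Lemma circ_deg (T : finType) (s : seq T) x : uniq s -> deg (circ s) x = 0.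
Proof.
move=> us; rewrite /deg /circ sumrB sum_ind_eq.
have E : forall y, ((y \in s) && (x == next s y)) = ((x \in s) && (y == prev s x)).
  move=> y; case: (eqVneq y (prev s x)) => [->|ne].
    by rewrite next_prev // eqxx mem_prev !andbT.
  rewrite !andbF; apply/negbTE; apply/negP => /andP[_ /eqP E].
  by move: ne; rewrite E prev_next // eqxx.
under eq_bigr do rewrite E.
by rewrite sum_ind_eq subrr.
Qed.

Lemma circ_supp (T : finType) (e : rel T) (s : seq T) x y :
  symmetric e -> cycle e s -> circ s x y != 0 -> e x y.
Proof.
move=> esym cs; rewrite /circ.
case/boolP: ((x \in s) && (y == next s x)) => [/andP[xs /eqP ->] _|_].
  exact: next_cycle.
case/boolP: ((y \in s) && (x == next s y)) => [/andP[ys /eqP ->] _|_].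
  by rewrite esym next_cycle.
by rewrite subrr eqxx.
Qed.

Lemma circ_norm (T : finType) (s : seq T) x y : `|circ s x y| <= 1.
Proof.
rewrite /circ; case: (_ && _); case: (_ && _) => /=;
by rewrite ?subrr ?sub0r ?subr0 ?normrN ?normr0 ?normr1.
Qed.

Definition epsf (T : finType) (a : T -> T -> R) : R :=
  \prod_(x : T * T | 0 < a x.1 x.2) a x.1 x.2.

Lemma eps_gt0 (T : finType) (a : T -> T -> R) : 0 < epsf a.
Proof. by apply: prodr_gt0 => x. Qed.

Lemma eps_le (T : finType) (a : T -> T -> R) x y :
  weight_fun a -> 0 < a x y -> epsf a <= a x y.
Proof.
move=> [a0 asym a1] Hp.
have le1 : forall x y, a x y <= 1.
  move=> x' y'; rewrite -a1.
  have h1 : a x' y' <= \sum_j a x' j by apply: (@le_sum_term _ (fun j => a x' j) y' (a0 x')).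
  have h2 : \sum_j a x' j <= \sum_i \sum_j a i j.
    by apply: (@le_sum_term _ (fun i => \sum_j a i j) x') => i; exact: sumr_ge0.
  exact: le_trans h1 h2.
rewrite /epsf (bigD1 (x, y)) //=; apply: ler_piMr; first exact: ltW.
by apply: prodr_ile1 => i /andP[/ltW -> _]; rewrite le1.
Qed.

Lemma has_cycle_not_forest (T : finType) (a : T -> T -> R) :
  no_self_loops a -> ~ forest a -> has_cycle a.
Proof. by move=> nsl nf; apply: NNPP => nh; apply: nf. Qed.

Lemma circ01 (T : finType) (z0 z1 z2 : T) t :
  uniq [:: z0, z1, z2 & t] -> circ [:: z0, z1, z2 & t] z0 z1 = 1.
Proof.
rewrite /= !inE negb_or => /andP[/andP[n01 /norP[n02 _]] _].
rewrite /circ /next /= !eqxx /= (eq_sym z1 z0) (negbTE n01) (negbTE n02) !inE !eqxx /=.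
by rewrite andbF subr0.
Qed.

Lemma neither_forest (U V : finType) (alpha : U -> U -> R) (beta : V -> V -> R) :
  weight_fun alpha -> weight_fun beta ->
  no_self_loops alpha -> no_self_loops beta ->
  ~ forest alpha -> ~ forest beta -> ~ strongly_disjoint alpha beta.
Proof.
move=> wa wb nsla nslb nfa nfb.
have [sa [sza usa csa]] := has_cycle_not_forest nsla nfa.
have [sb [szb usb csb]] := has_cycle_not_forest nslb nfb.
have wa' := wa; have wb' := wb.
case: wa' => [a0 asym a1]; case: wb' => [b0 bsym b1].
have esa : symmetric (edge alpha) by move=> x y; rewrite /edge asym.
have esb : symmetric (edge beta) by move=> x y; rewrite /edge bsym.
case: sa sza usa csa => [|x0 [|x1 [|x2 ta]]] // _ usa csa.
case: sb szb usb csb => [|y0 [|y1 [|y2 tb]]] // _ usb csb.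
set sa := [:: x0, x1, x2 & ta]; set sb := [:: y0, y1, y2 & tb].
pose F := fun x y => epsf alpha * circ sa x y.
pose D := fun x y => epsf beta * circ sb x y.
have dF : forall x, deg F x = 0 by move=> x; rewrite /deg -mulr_sumr -/(deg _ _) circ_deg // mulr0.
have dD : forall x, deg D x = 0 by move=> x; rewrite /deg -mulr_sumr -/(deg _ _) circ_deg // mulr0.
apply: (not_strong (F := F) (D := D) (x := (x0, y0)) (y := (x1, y1))) => //.
- by move=> x y; rewrite /F circ_anti mulrN.
- by move=> x y; rewrite /D circ_anti mulrN.
- move=> [u v] [u' v'] /=; rewrite /F /D.
  have ab0 := mulr_ge0 (a0 u u') (b0 v v').
  have [ca|ca] := eqVneq (circ sa u u') 0.
    by rewrite ca mulr0 mul0r addr0.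
  have [cb|cb] := eqVneq (circ sb v v') 0.
    by rewrite cb !mulr0 addr0.
  have ea := eps_le wa (circ_supp esa csa ca).
  have eb := eps_le wb (circ_supp esb csb cb).
  have ga := eps_gt0 alpha; have gb := eps_gt0 beta.
  have h1 : epsf alpha * epsf beta <= alpha u u' * beta v v'.
    by apply: ler_pM => //; apply: ltW.
  have h2 : `|epsf alpha * circ sa u u' * (epsf beta * circ sb v v')|
      <= epsf alpha * epsf beta.
    rewrite !normrM (gtr0_norm ga) (gtr0_norm gb).
    apply: ler_pM; rewrite ?mulr_ge0 ?normr_ge0 //; try exact: ltW; apply: ler_piMr; rewrite ?circ_norm //; exact: ltW.
  move: h2; rewrite ler_norml => /andP[h2 _]; lra.
- by move=> *; rewrite dD !mulr0.
- by move=> *; rewrite dF mulr0 mul0r !mulr0.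
- by rewrite /F /D /sa /sb /= !circ01 // !mulr1 mulf_neq0 // lt0r_neq0 // eps_gt0.
Qed.

End Main.

Theorem corollary5p6 (R : realType) (U V : finType)
  (alpha : U -> U -> R) (beta : V -> V -> R) :
  weight_fun alpha -> weight_fun beta ->
  fully_supported alpha -> fully_supported beta ->
  no_self_loops alpha -> no_self_loops beta ->
  (strongly_disjoint alpha beta <->
   weakly_disjoint alpha beta /\
   ((forest alpha /\ ~ forest beta) \/ (~ forest alpha /\ forest beta))).
Proof.
move=> wa wb fsa fsb nsla nslb; split.
- move=> S; split.
  + move=> g Hg u v.
    rewrite -deg_tensor /deg; apply: eq_bigr => y _; exact: S.
  + have [fa|nfa] := classic (forest alpha); have [fb|nfb] := classic (forest beta).
    * by exfalso; exact: (both_forest wa wb fsa fsb fa fb S).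
    * by left.
    * by right.
    * by exfalso; exact: (neither_forest wa wb nsla nslb nfa nfb S).
- move=> [Hw Hf]; apply: back => //.
  by case: Hf => [[? _]|[_ ?]]; [left|right].
Qed.
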